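(* Let $N$ be a finite set with $|N|\ge 3$. Then for every $a\in N$ the inequality $\sum_{B:\,\emptyset\neq B\subseteq N\setminus\{a\}}\eta(a|B)\le 1$ defines a facet of $P_N$.
   Context: $\mathrm{DAG}(N)$ is the set of acyclic directed graphs over $N$; $\mathrm{pa}_G(a)$ is the parent set of $a$ in $G$. $\Upsilon=\{(a|B): a\in N,\ \emptyset\neq B\subseteq N\setminus\{a\}\}$; $\eta_G\in\mathbb{R}^{\Upsilon}$ has $\eta_G(a|B)=1$ if $B=\mathrm{pa}_G(a)$, else $0$; $P_N=\mathrm{conv}\{\eta_G:G\in\mathrm{DAG}(N)\}$ is the family-variable polytope. *)

(* Defs.v *)
From HB Require Import structures.
From mathcomp Require Import all_boot all_order all_algebra.
From mathcomp Require Import reals.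
Set Implicit Arguments. Unset Strict Implicit. Unset Printing Implicit Defensive.
Import Order.TTheory GRing.Theory Num.Theory.
Local Open Scope ring_scope.

Section FamilyVariable.
Variable N : finType.

Definition upsilon_pred (p : N * {set N}) : bool := (p.2 != set0) && (p.1 \notin p.2).
Definition Upsilon : finType := {p : N * {set N} | upsilon_pred p}.

(* A directed graph over N, given by its parent sets: b -> a is an edge iff
   b \in pa a. *)
Definition digraph := {ffun N -> {set N}}.
Definition edge (G : digraph) : rel N := fun b a => b \in G a.

(* Acyclic: there is no directed cycle (a nonempty closed directed path);
   this also excludes loops. *)
Definition acyclic (G : digraph) : Prop :=
  forall (x : N) (p : seq N), path (edge G) x p -> last x p = x -> p = [::].

End FamilyVariable.

Section Polytope.
Variable R : realType.
Variable N : finType.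

Definition vec := Upsilon N -> R.

Definition eta (G : digraph N) : vec :=
  fun u => if (val u).2 == G (val u).1 then 1 else 0.

Definition conv (S : vec -> Prop) : vec -> Prop :=
  fun x => exists (k : nat) (p : 'I_k -> vec) (w : 'I_k -> R),
    [/\ forall i, S (p i), forall i, 0 <= w i, \sum_(i < k) w i = 1 &
        forall u, x u = \sum_(i < k) w i * p i u].

Definition PN : vec -> Prop :=
  conv (fun x => exists G : digraph N, acyclic G /\ x = eta G).

Definition lin_indep (k : nat) (v : 'I_k -> vec) : Prop :=
  forall lam : 'I_k -> R,
    (forall u, \sum_(i < k) lam i * v i u = 0) -> forall i, lam i = 0.

Definition aff_indep (k : nat) (p : 'I_k.+1 -> vec) : Prop :=
  lin_indep (fun i : 'I_k => fun u => p (lift ord0 i) u - p ord0 u).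

Definition has_affdim (S : vec -> Prop) (d : nat) : Prop :=
  (exists p : 'I_d.+1 -> vec, (forall i, S (p i)) /\ aff_indep p) /\
  (forall p : 'I_d.+2 -> vec, (forall i, S (p i)) -> ~ aff_indep p).

Definition dot (c x : vec) : R := \sum_u c u * x u.

Definition is_facet (P : vec -> Prop) (c : vec) (b : R) : Prop :=
  (forall x, P x -> dot c x <= b) /\
  exists d : nat, has_affdim P d.+1 /\ has_affdim (fun x => P x /\ dot c x = b) d.

Definition coef_a (a : N) : vec := fun u => if (val u).1 == a then 1 else 0.

End Polytope.

(* Main.v *)
Require Import Defs.
From HB Require Import structures.
From mathcomp Require Import all_boot all_order all_algebra.
From mathcomp Require Import reals.
From mathcomp Require Import zify lra.
Import Order.TTheory GRing.Theory Num.Theory.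
Local Open Scope ring_scope.
Section Lin.
Variable R : realType.
Variable N : finType.
Local Notation U := (Upsilon N).
Local Notation vec := (@vec R N).

Lemma dep_many (k : nat) (v : 'I_k -> vec) :
  (#|U| < k)%N -> ~ lin_indep v.
Proof.
move=> hk hind.
pose A : 'M[R]_(k, #|U|) := \matrix_(i, j) v i (enum_val j).
have hnf : ~~ row_free A.
  by rewrite -row_leq_rank -ltnNge (leq_ltn_trans (rank_leq_col A)).
have : kermx A != 0 by rewrite kermx_eq0.
case/eqP; apply/matrixP => r i; rewrite [RHS]mxE.
pose lam := fun i => kermx A r i.
have H : forall u, \sum_(i < k) lam i * v i u = 0.
  move=> u.
  have := congr1 (fun M : 'M_(k, #|U|) => M r (enum_rank u)) (mulmx_ker A).
  rewrite /= !mxE => e; rewrite -[X in _ = X]e; apply: eq_bigr => j _.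
  by rewrite [A _ _]mxE enum_rankK.
exact: (hind lam H i).
Qed.

Lemma lin_indep_ext (k : nat) (v w : 'I_k -> vec) :
  (forall i u, v i u = w i u) -> lin_indep v -> lin_indep w.
Proof.
move=> e hv lam H; apply: hv => u; rewrite -[RHS](H u).
by apply: eq_bigr => i _; rewrite e.
Qed.

Lemma lin_aff (k : nat) (p : 'I_k.+1 -> vec) : lin_indep p -> aff_indep p.
Proof.
move=> hp lam H i.
pose lam' := fun j : 'I_k.+1 => if unlift ord0 j is Some j' then lam j'
  else - \sum_(l < k) lam l.
have E : forall j, lam' (lift ord0 j) = lam j by move=> j; rewrite /lam' liftK.
have E0 : lam' ord0 = - \sum_(l < k) lam l by rewrite /lam' unlift_none.
have H' : forall u, \sum_(j < k.+1) lam' j * p j u = 0.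
  move=> u; rewrite big_ord_recl E0.
  rewrite [X in _ + X](eq_bigr (fun j => lam j * p (lift ord0 j) u)); last by move=> j _; rewrite E.
  rewrite -[RHS](H u) mulNr mulr_suml -sumrN -big_split /=.
  by apply: eq_bigr => j _; rewrite mulrBr addrC.
by have := hp lam' H' (lift ord0 i); rewrite E.
Qed.

Lemma lin_indep_enum (k : nat) (hk : #|U| = k) (F : U -> vec) :
  (forall mu : U -> R, (forall v, \sum_u mu u * F u v = 0) -> forall u, mu u = 0) ->
  lin_indep (fun i : 'I_k => F (enum_val (cast_ord (esym hk) i))).
Proof.
move=> hF lam H i.
pose h := fun u : U => cast_ord hk (enum_rank u).
have hb : bijective h.
  exists (fun i => enum_val (cast_ord (esym hk) i)) => x.
    by rewrite /h cast_ordK enum_rankK.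
  by rewrite /h enum_valK cast_ordKV.
have hmu : forall u, lam (h u) = 0.
  apply: hF => v; rewrite -[RHS](H v) (reindex h) /=; last by apply: onW_bij.
  by apply: eq_bigr => u _; rewrite /h cast_ordK enum_rankK.
by have := hmu (enum_val (cast_ord (esym hk) i)); rewrite /h enum_valK cast_ordKV.
Qed.

End Lin.
Arguments dep_many {R N k}. Arguments lin_indep_ext {R N k}. Arguments lin_aff {R N k}.
Section Graphs.
Variable N : finType.
Local Notation U := (Upsilon N).

Lemma acyclic_rank (G : digraph N) (r : N -> nat) :
  (forall b c, b \in G c -> (r b < r c)%N) -> acyclic G.
Proof.
move=> hr.
have key : forall p x, path (edge G) x p -> p != [::] -> (r x < r (last x p))%N.
  elim=> [|y p IH] x //= /andP [exy hp] _.
  have rxy := hr _ _ exy.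
  case: p IH hp => [|z p] IH hp //=.
  by apply: ltn_trans rxy _; apply: (IH y hp).
move=> x p hp hl; apply/eqP; apply: contraT => hne.
by have := key p x hp hne; rewrite hl ltnn.
Qed.

Lemma eqU (v u : U) :
  (v == u) = ((val v).1 == (val u).1) && ((val v).2 == (val u).2).
Proof. by rewrite -val_eqE; case: (val v) => ? ?; case: (val u). Qed.

Lemma Upred (u : U) : ((val u).2 != set0) && ((val u).1 \notin (val u).2).
Proof. exact: (valP u). Qed.

Variable a : N.
Hypothesis hN : (3 <= #|N|)%N.

Definition dsel (c : N) : N := odflt a [pick d | (d != a) && (d != c)].

Lemma dselP c : (dsel c != a) && (dsel c != c).
Proof.
rewrite /dsel; case: pickP => [d hd | hn] //=.
exfalso.
have : (#|[set: N]| <= #|[set a; c]|)%N.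
  apply: subset_leq_card; apply/subsetP => x _; rewrite !inE.
  by move: (hn x); case: (x == a); case: (x == c).
by rewrite cardsT cards2; move: hN; case: (a != c) => /=; lia.
Qed.

Definition G0 : digraph N := [ffun _ => set0].
Definition G1 (u : U) : digraph N :=
  [ffun x => if x == (val u).1 then (val u).2 else set0].
Definition G2 (u : U) : digraph N :=
  [ffun x => if x == (val u).1 then (val u).2
             else if x == a then [set dsel (val u).1] else set0].

Lemma G0_acyclic : acyclic G0.
Proof. by apply: (@acyclic_rank _ (fun _ => 0%N)) => b c; rewrite /G0 ffunE inE. Qed.

Lemma G1_acyclic u : acyclic (G1 u).
Proof.
apply: (@acyclic_rank _ (fun x => nat_of_bool (x == (val u).1))) => b c.
rewrite /G1 ffunE; case: (eqVneq c (val u).1) => [_ hb|]; last by rewrite inE.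
move/andP: (Upred u) => [_ hn].
by case: eqP hb hn => [->->|].
Qed.

Lemma G2_acyclic u : acyclic (G2 u).
Proof.
apply: (@acyclic_rank _ (fun x => if x == (val u).1 then 2%N
  else if x == a then 1%N else 0%N)) => b c.
rewrite /G2 ffunE; case: ifP => [_ hb|hc].
  move/andP: (Upred u) => [_ hn].
  case: eqP hb hn => [->->//|_ _ _].
  by case: (b == a).
case: ifP => [/eqP ec|]; last by rewrite inE.
rewrite inE => /eqP ->.
by move/andP: (dselP (val u).1) => [/negbTE -> /negbTE ->].
Qed.

End Graphs.
Arguments Upred {N}. Arguments G1 {N}. Arguments G2 {N}. Arguments eqU {N}. Arguments G0 {N}. Arguments dsel {N}. Arguments dselP {N}.

Section Eta.
Variable R : realType.
Variable N : finType.
Local Notation U := (Upsilon N).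
Variable a : N.

Lemma sum_valeq (x : N * {set N}) :
  \sum_(v : U) (if val v == x then 1 else 0 : R) = if upsilon_pred x then 1 else 0.
Proof.
case: (boolP (upsilon_pred x)) => hx.
  pose s : U := exist _ x hx.
  rewrite (bigD1 s) //= eqxx big1 ?addr0 // => v hv.
  by rewrite ifN // -[x]/(val s) val_eqE.
apply: big1 => v _; case: eqP => // e.
by move: (valP v); rewrite e (negbTE hx).
Qed.

Lemma dot_eta (G : digraph N) :
  dot (coef_a R a) (Defs.eta R G) = if upsilon_pred (a, G a) then 1 else 0.
Proof.
rewrite /dot -sum_valeq; apply: eq_bigr => v _.
rewrite /coef_a /Defs.eta; case: (val v) => x B /=.
case: (eqVneq x a) => [->|hx]; rewrite ?mul1r ?mul0r.
  by rewrite xpair_eqE eqxx.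
by rewrite xpair_eqE (negbTE hx).
Qed.

Lemma sum_delta (mu : U -> R) (v : U) :
  \sum_u mu u * (if v == u then 1 else 0) = mu v.
Proof.
rewrite (bigD1 v) //= eqxx mulr1 big1 ?addr0 // => u hu.
by rewrite eq_sym (negbTE hu) mulr0.
Qed.

Lemma eta_G0 (v : U) : Defs.eta R (@G0 N) v = 0.
Proof.
rewrite /Defs.eta /G0 /G1 /G2 ffunE; move/andP: (Upred v) => [hv _].
by rewrite (negbTE hv).
Qed.

Lemma eta_G1 (u v : U) : Defs.eta R (G1 u) v = if v == u then 1 else 0.
Proof.
rewrite /Defs.eta /G0 /G1 /G2 ffunE eqU; case: ((val v).1 =P (val u).1) => //= _.
by move/andP: (Upred v) => [/negbTE -> _].
Qed.

Lemma eta_G2 (u v : U) : ((val v).1 != a) || ((val u).1 == a) ->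
  Defs.eta R (G2 a u) v = if v == u then 1 else 0.
Proof.
move=> h; rewrite /Defs.eta /G0 /G1 /G2 ffunE eqU.
case: ((val v).1 =P (val u).1) => //= hne.
case: ((val v).1 =P a) h => [e|_ _] /=.
  by move=> /eqP e'; case: hne; rewrite e e'.
by move/andP: (Upred v) => [/negbTE -> _].
Qed.

End Eta.

Section Main.
Variable R : realType.
Variable N : finType.
Local Notation U := (Upsilon N).
Local Notation vec := (@vec R N).

Lemma inPN (G : digraph N) : acyclic G -> PN (Defs.eta R G).
Proof.
move=> hG; exists 1%N, (fun _ => Defs.eta R G), (fun _ => 1); split.
- by move=> _; exists G.
- by move=> _; apply: ler01.
- by rewrite big_ord1.
- by move=> u; rewrite big_ord1 mul1r.
Qed.

Lemma dot_sum (c : vec) (k : nat) (lam : 'I_k -> R) (W : 'I_k -> vec) :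
  \sum_u c u * (\sum_(i < k) lam i * W i u) = \sum_(i < k) lam i * dot c (W i).
Proof.
rewrite /dot; under eq_bigr => u _ do rewrite mulr_sumr.
rewrite exchange_big /=; apply: eq_bigr => i _; rewrite mulr_sumr.
by apply: eq_bigr => u _; rewrite mulrCA.
Qed.

Lemma dotB (c x y : vec) : dot c (fun u => x u - y u) = dot c x - dot c y.
Proof.
by rewrite /dot -sumrB; apply: eq_bigr => u _; rewrite mulrBr.
Qed.

End Main.

Theorem lemma3 (R : realType) (N : finType) (hN : (3 <= #|N|)%N) (a : N) :
  is_facet (@PN R N) (@coef_a R N a) 1.
Proof.
set c := coef_a R a.
have hd0 := dselP a hN a.
have hu0 : upsilon_pred (a, [set dsel a a]).
  apply/andP; split; first by apply/set0Pn; exists (dsel a a); rewrite inE.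
  by rewrite /= inE eq_sym; case/andP: hd0.
pose u0 : Upsilon N := exist (@upsilon_pred N) _ hu0.
have hc : forall G : digraph N, dot c (Defs.eta R G) = if upsilon_pred (a, G a) then 1 else 0.
  exact: dot_eta.
have hD : #|Upsilon N| = (#|Upsilon N|).-1.+1.
  by rewrite prednK // -cardsT card_gt0; apply/set0Pn; exists u0.
set d := (#|Upsilon N|).-1 in hD.
pose sig := fun (k : nat) (e : #|Upsilon N| = k) (i : 'I_k) => enum_val (cast_ord (esym e) i).
split.
  move=> x [k [p [w [hp hw hs hx]]]].
  have -> : dot c x = \sum_(i < k) w i * dot c (p i).
    by rewrite -dot_sum /dot; apply: eq_bigr => u _; rewrite hx.
  rewrite -hs; apply: ler_sum => i _; apply: ler_piMr => //.
  by case: (hp i) => G [_ ->]; rewrite hc; case: ifP => _ //; apply: ler01.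
exists d; split; split.
- pose p := fun i : 'I_d.+2 => if unlift ord0 i is Some j
    then Defs.eta R (G1 (sig _ hD j)) else Defs.eta R (@G0 N).
  exists p; split.
    move=> i; rewrite /p; case: (unlift ord0 i) => [j|].
      exact/inPN/G1_acyclic.
    exact/inPN/G0_acyclic.
  have := @lin_indep_enum R N _ hD (fun u => Defs.eta R (G1 u)).
  move=> H; rewrite /aff_indep; apply: (lin_indep_ext _ _ _ (H _)).
    by move=> i u; rewrite /p liftK unlift_none eta_G0 subr0.
  move=> mu hmu v; have := hmu v.
  by under eq_bigr => u _ do rewrite eta_G1; rewrite sum_delta.
- move=> p _ hp; apply: (dep_many _ _ hp).
  by rewrite hD.
- pose p := fun i : 'I_d.+1 => Defs.eta R (G2 a (sig _ hD i)).
  have hface : forall u : Upsilon N, dot c (Defs.eta R (G2 a u)) = 1.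
    move=> u; rewrite hc /G2 ffunE.
    case: (a =P (val u).1) => [e|hne]; first by rewrite e -surjective_pairing (valP u).
rewrite eqxx ifT //.     apply/andP; split; first by apply/set0Pn; exists (dsel a (val u).1); rewrite inE.
    by rewrite /= inE eq_sym; case/andP: (dselP a hN (val u).1).
  exists p; split.
    by move=> i; split; [exact/inPN/G2_acyclic | exact: hface].
  apply: lin_aff.
  apply: (@lin_indep_enum R N _ hD (fun u => Defs.eta R (G2 a u))).
  move=> mu hmu.
  have ph1 : forall v : Upsilon N, (val v).1 != a -> mu v = 0.
    move=> v hv; have := hmu v.
    under eq_bigr => u _ do rewrite eta_G2 ?hv //.
    by rewrite sum_delta.
  move=> v; case: (boolP ((val v).1 == a)) => hv; last exact: ph1.
  have := hmu v.
  rewrite (eq_bigr (fun u => mu u * (if v == u then 1 else 0))) ?sum_delta //.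
  move=> u _; case: (boolP ((val u).1 == a)) => hu.
    by rewrite eta_G2 ?hu ?orbT.
  by rewrite ph1 // !mul0r.
- move=> p hp hind.
  set q := fun j : 'I_d.+1 => fun u => p (lift ord0 j) u - p ord0 u.
  have hq : forall j, dot c (q j) = 0.
    by move=> j; rewrite /q dotB (proj2 (hp _)) (proj2 (hp _)) subrr.
  pose V := fun i : 'I_d.+2 => if unlift ord_max i is Some j then q j else c.
  have hW : forall i : 'I_d.+1, widen_ord (leqnSn _) i = lift ord_max i.
    by move=> i; apply: val_inj; exact: (esym (lift_max i)).
  have hcc : 0 < dot c c.
    rewrite /dot (bigD1 u0) //= {1 2}/c /coef_a /= eqxx mulr1.
    have : 0 <= \sum_(u | u != u0) c u * c u.
      by apply: sumr_ge0 => u _; rewrite /c /coef_a; case: ifP; rewrite ?mulr1 ?mulr0.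
    lra.
  apply: (@dep_many R N _ V); first by rewrite hD.
  move=> lam hlam.
  have hmax : lam ord_max = 0.
    have : \sum_u c u * (\sum_(i < d.+2) lam i * V i u) = 0.
      by rewrite big1 // => u _; rewrite hlam mulr0.
    rewrite dot_sum big_ord_recr /= big1.
      rewrite /V unlift_none add0r => /eqP; rewrite mulf_eq0 => /orP [/eqP //|].
      by move=> /eqP e; move: hcc; rewrite e ltxx.
    by move=> i _; rewrite /V hW liftK hq mulr0.
  have hrest : forall j : 'I_d.+1, lam (lift ord_max j) = 0.
    apply: hind => u; have := hlam u; rewrite big_ord_recr /= hmax mul0r addr0.
    by move=> e; rewrite -[RHS]e; apply: eq_bigr => j _; rewrite /V hW liftK.
  move=> i; case: (unliftP ord_max i) => [j ->|->] //.
Qed.
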